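(* Let $A,B\in\mathbb{R}^{m_1\times m_2}$ and $a>0$. Then $$\mathrm{TL1}_a\big(A+P_A^\perp(B)\big)=\mathrm{TL1}_a(A)+\mathrm{TL1}_a\big(P_A^\perp(B)\big).$$
   Context: For $a>0$ and a matrix $X\in\mathbb{R}^{m_1\times m_2}$ with singular values $\sigma_1(X)\ge\dots\ge\sigma_m(X)$, $m=\min\{m_1,m_2\}$, define $\mathrm{TL1}_a(X)=\sum_{j=1}^m\frac{(a+1)\sigma_j(X)}{a+\sigma_j(X)}$. For $A$ with SVD $A=U_AD_AV_A^\top$ (compact, over the nonzero singular values), let $S_U(A)$, $S_V(A)$ be the linear subspaces spanned by the columns of $U_A$, $V_A$, and $S_U^\perp(A)$, $S_V^\perp(A)$ their orthogonal complements. With $\mathbf{P}_S$ the orthogonal projection onto a subspace $S$, define $P_A^\perp(B)=\mathbf{P}_{S_U^\perp(A)}\,B\,\mathbf{P}_{S_V^\perp(A)}$. *)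

(* Defs.v *)
From HB Require Import structures.
From mathcomp Require Import all_boot all_order all_algebra.
From mathcomp Require Import boolp classical_sets reals.
Set Implicit Arguments. Unset Strict Implicit. Unset Printing Implicit Defensive.
Import Order.TTheory GRing.Theory Num.Theory.
Local Open Scope ring_scope.
Local Open Scope classical_set_scope.

Section Defs.
Variable R : realType.

Definition orthogonalmx n (U : 'M[R]_n) : Prop := U *m U^T = 1%:M.

Definition rdiag m1 m2 (s : seq R) : 'M[R]_(m1, m2) :=
  \matrix_(i < m1, j < m2) (if (i : nat) == j then s`_i else 0).

Definition is_svals m1 m2 (X : 'M[R]_(m1, m2)) (s : seq R) : Prop :=
  [/\ size s = minn m1 m2, sorted (fun x y => y <= x) s, all (fun x => 0 <= x) s
    & exists (U : 'M[R]_m1) (V : 'M[R]_m2),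
        [/\ orthogonalmx U, orthogonalmx V & X = U *m rdiag m1 m2 s *m V^T]].

Definition svals m1 m2 (X : 'M[R]_(m1, m2)) : seq R :=
  xget [::] [set s | is_svals X s].

Definition sigma m1 m2 (X : 'M[R]_(m1, m2)) (j : nat) : R := (svals X)`_j.

Definition TL1 (a : R) m1 m2 (X : 'M[R]_(m1, m2)) : R :=
  \sum_(j < minn m1 m2) ((a + 1) * sigma X j / (a + sigma X j)).

(* orthogonal projection (acting on column vectors x |-> P x) onto the
   subspace S of R^n spanned by the rows of W (a symmetric idempotent
   matrix with range S). *)
Definition orthoproj k n (W : 'M[R]_(k, n)) : 'M[R]_n :=
  xget 0 [set P : 'M[R]_n | [/\ P^T = P, P *m P = P & (P == W)%MS]].

(* S_U^perp(A): orthogonal complement of the column space of A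
   = span of the columns of U_A; as row space: rows u with u *m A = 0. *)
Definition SUperp m1 m2 (A : 'M[R]_(m1, m2)) : 'M[R]_m1 := kermx A.
(* S_V^perp(A): orthogonal complement of the row space of A
   = span of the columns of V_A. *)
Definition SVperp m1 m2 (A : 'M[R]_(m1, m2)) : 'M[R]_m2 := kermx A^T.

Definition Pperp m1 m2 (A B : 'M[R]_(m1, m2)) : 'M[R]_(m1, m2) :=
  orthoproj (SUperp A) *m B *m orthoproj (SVperp A).

End Defs.

(* Main.v *)
Require Import Defs.
From mathcomp Require Import all_boot all_order all_algebra.
From mathcomp Require Import boolp classical_sets reals.
From mathcomp Require Import topology normedtype derive.
From mathcomp Require Import ring lra.
Import Order.TTheory GRing.Theory Num.Theory.
Import numFieldTopology.Exports numFieldNormedType.Exports.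
Local Open Scope ring_scope.
Set Implicit Arguments. Unset Strict Implicit. Unset Printing Implicit Defensive.

Section P2.
Variable R : realType.

Definition nrm2 n (w : 'rV[R]_n) : R := (w *m w^T) 0 0.

Lemma nrm2E n (w : 'rV[R]_n) : nrm2 w = \sum_j w 0 j ^+ 2.
Proof. by rewrite /nrm2 mxE; apply: eq_bigr => j _; rewrite mxE expr2. Qed.

Lemma nrm2_ge0 n (w : 'rV[R]_n) : 0 <= nrm2 w.
Proof. by rewrite nrm2E sumr_ge0 // => j _; rewrite sqr_ge0. Qed.

Lemma nrm2_eq0 n (w : 'rV[R]_n) : nrm2 w = 0 -> w = 0.
Proof.
rewrite nrm2E => /eqP; rewrite psumr_eq0 => [/allP h|j _]; last by rewrite sqr_ge0.
apply/rowP => j; rewrite mxE; apply/eqP; rewrite -sqrf_eq0.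
by apply: (implyP (h j _)); rewrite ?mem_index_enum.
Qed.

Lemma nrm2Z n c (w : 'rV[R]_n) : nrm2 (c *: w) = c ^+ 2 * nrm2 w.
Proof. by rewrite !nrm2E mulr_sumr; apply: eq_bigr => j _; rewrite mxE exprMn. Qed.

Lemma nrm2_orth n k (w : 'M[R]_(1, n)) (U : 'M[R]_(n, k)) : U *m U^T = 1%:M ->
  nrm2 (w *m U) = nrm2 w.
Proof. by move=> hU; rewrite /nrm2 trmx_mul mulmxA -(mulmxA w) hU mulmx1. Qed.

Lemma nrm2_row n1 n2 (a : 'rV[R]_n1) (b : 'rV[R]_n2) :
  nrm2 (row_mx a b) = nrm2 a + nrm2 b.
Proof. by rewrite /nrm2 tr_row_mx mul_row_col mxE. Qed.

Lemma nrm2_0 n : nrm2 (0 : 'rV[R]_n) = 0.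
Proof. by rewrite /nrm2 mul0mx mxE. Qed.

Lemma mx11E (a : 'M[R]_1) : a = (a 0 0)%:M.
Proof. exact: mx11_scalar. Qed.

Lemma usub1 n : usubmx (1%:M : 'M[R]_(1 + n)) = row_mx 1%:M 0.
Proof. by rewrite (scalar_mx_block 1 n) block_mxEv col_mxKu. Qed.

Lemma householder n (v : 'rV[R]_(1 + n)) : nrm2 v = 1 ->
  exists H : 'M[R]_(1 + n), H *m H^T = 1%:M /\ usubmx H = v.
Proof.
move=> v1.
pose e0 : 'rV[R]_(1 + n) := usubmx 1%:M.
pose w := e0 - v.
pose c := nrm2 w.
have [c0|c0] := eqVneq c 0.
  exists 1%:M; split; first by rewrite trmx1 mulmx1.
  by move/nrm2_eq0: c0 => /eqP; rewrite subr_eq0 => /eqP.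
pose P := w^T *m w.
have PP : P *m P = c *: P.
  by rewrite /P mulmxA -(mulmxA w^T) (mx11E (w *m w^T)) -/(nrm2 w) -/c mul_mx_scalar -scalemxAl.
pose H := 1%:M - (2 / c) *: P.
have HT : H^T = H.
  by rewrite /H (raddfB (@trmx R _ _)) /= linearZ /= trmx1 /P trmx_mul trmxK.
exists H; split.
  rewrite HT /H mulmxBl !mulmxBr mul1mx mulmx1 -scalemxAl -scalemxAr.
  rewrite mul1mx -scalemxAr PP !scalerA.
  have -> : 2 / c * (2 / c) * c = 2 / c + 2 / c.
    by rewrite -mulrA divfK // mulr_natr mulr2n.
  by rewrite scalerDl opprB addrK subrK.
rewrite /H (raddfB (@usubmx R _ _ _)) /= linearZ /= /P -mul_usub_mx.
have ee : e0 *m e0^T = 1%:M.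
  by rewrite /e0 usub1 tr_row_mx mul_row_col trmx0 mulmx0 addr0 trmx1 mulmx1.
have hv : v *m v^T = 1%:M by rewrite (mx11E (v *m v^T)) -/(nrm2 v) v1.
have hc : c%:M = 2%:M - (e0 *m v^T + (e0 *m v^T)^T) :> 'M_1.
  rewrite /c /nrm2 -mx11E /w (raddfB (@trmx R _ _)) /= mulmxBl !mulmxBr ee hv.
  have h2 : (2%:M : 'M[R]_1) = 1%:M + 1%:M by rewrite (raddfMn (@scalar_mx R 1)) mulr2n.
  by rewrite trmx_mul trmxK opprB addrACA -opprD h2.
have hcT : (e0 *m v^T)^T = e0 *m v^T by rewrite {1}(mx11E (e0 *m v^T)) tr_scalar_mx -mx11E.
have hw : usubmx w^T = ((c / 2)%:M : 'M_1).
  have ha : usubmx w^T = 1%:M - e0 *m v^T.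
    rewrite /w (raddfB (@trmx R _ _)) /= (raddfB (@usubmx R 1 n 1)) /=.
    congr (_ - _); last by rewrite /e0 mul_usub_mx mul1mx.
    by rewrite -trmx_lsub /e0 usub1 row_mxKl tr_scalar_mx.
  set al := (e0 *m v^T) 0 0.
  move: hc; rewrite hcT {1 2}[e0 *m v^T]mx11E -/al => hc.
  have hal : c = 2 - (al + al).
    by move/(congr1 (fun M : 'M_1 => M 0 0)): hc; rewrite !mxE /= !mulr1n.
  rewrite ha [e0 *m v^T]mx11E -/al hal -(raddfB (@scalar_mx R 1)); congr (_%:M).
  by field.
rewrite hw mul_scalar_mx scalerA (_ : 2 / c * (c / 2) = 1) ?scale1r.
  by rewrite /w opprB addrC subrK.
by field; rewrite c0.
Qed.


Lemma mxEB m n (A B : 'M[R]_(m, n)) i j : (A - B) i j = A i j - B i j.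
Proof. by rewrite !mxE. Qed.
Lemma mxED m n (A B : 'M[R]_(m, n)) i j : (A + B) i j = A i j + B i j.
Proof. by rewrite !mxE. Qed.
Lemma mxEZ m n c (A : 'M[R]_(m, n)) i j : (c *: A) i j = c * A i j.
Proof. by rewrite !mxE. Qed.
Lemma mxEN m n (A : 'M[R]_(m, n)) i j : (- A) i j = - A i j.
Proof. by rewrite !mxE. Qed.

Definition gX m n (X : 'M[R]_(m, n)) (w : 'rV[R]_n) := nrm2 (w *m X^T).

Lemma gXZ m n (X : 'M[R]_(m, n)) c w : gX X (c *: w) = c ^+ 2 * gX X w.
Proof. by rewrite /gX -scalemxAl nrm2Z. Qed.

Lemma gX0 m n (X : 'M[R]_(m, n)) : gX X 0 = 0.
Proof. by rewrite /gX mul0mx nrm2E big1 // => j _; rewrite mxE expr0n. Qed.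

Lemma max_all m n (X : 'M[R]_(m, n)) v : nrm2 v = 1 ->
  (forall w, nrm2 w = 1 -> gX X w <= gX X v) ->
  forall w, gX X w <= gX X v * nrm2 w.
Proof.
move=> v1 hmax w.
have [w0|w0] := eqVneq (nrm2 w) 0.
  by rewrite w0 mulr0 (nrm2_eq0 w0) gX0.
have wp : 0 < nrm2 w by rewrite lt0r w0 nrm2_ge0.
set t := Num.sqrt (nrm2 w).
have tp : 0 < t by rewrite sqrtr_gt0.
have t2 : t ^+ 2 = nrm2 w by rewrite sqr_sqrtr // ltW.
have w'1 : nrm2 (t^-1 *: w) = 1 by rewrite nrm2Z exprVn t2 mulVf.
have h := hmax _ w'1; rewrite gXZ exprVn t2 in h.
by rewrite mulrC -ler_pdivrMl.
Qed.

Lemma gXE m n (X : 'M[R]_(m, n)) w : gX X w = (w *m (X^T *m X) *m w^T) 0 0.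
Proof. by rewrite /gX /nrm2 trmx_mul trmxK !mulmxA. Qed.

Lemma eigen_max m n (X : 'M[R]_(m, n)) v : nrm2 v = 1 ->
  (forall w, gX X w <= gX X v * nrm2 w) ->
  v *m (X^T *m X) = gX X v *: v.
Proof.
move=> v1 hall.
set l := gX X v; set S := X^T *m X.
pose y := v *m S - l *: v; have hy : y = v *m S - l *: v by [].
pose M := l%:M - S.
have MT : M^T = M by rewrite /M (raddfB (@trmx R _ _)) /= tr_scalar_mx /S trmx_mul trmxK.
have Q0 (w : 'rV[R]_n) : 0 <= (w *m M *m w^T) 0 0.
  rewrite /M mulmxBr mul_mx_scalar mulmxBl -scalemxAl mxEB mxEZ.
  by rewrite -/(nrm2 w) -gXE subr_ge0; exact: hall.
have vM : v *m M = - y by rewrite /M mulmxBr mul_mx_scalar /y opprB.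
have Mv : M *m v^T = - y^T.
  by rewrite -MT -trmx_mul vM (raddfN (@trmx R _ _)).
have vv : (v *m M *m v^T) 0 0 = 0.
  rewrite /M mulmxBr mul_mx_scalar mulmxBl -scalemxAl mxEB mxEZ.
  by rewrite -/(nrm2 v) -gXE v1 mulr1 subrr.
clearbody M y.
have hexp t : ((v + t *: y) *m M *m (v + t *: y)^T) 0 0 =
    t ^+ 2 * (y *m M *m y^T) 0 0 - 2 * t * nrm2 y.
  rewrite (raddfD (@trmx R _ _)) /= linearZ /= !mulmxDl !mulmxDr.
  rewrite -!scalemxAl -!scalemxAr !mxED !mxEZ vv.
  have e1 : (v *m M *m y^T) 0 0 = - nrm2 y by rewrite vM mulNmx mxEN.
  have e2 : (y *m M *m v^T) 0 0 = - nrm2 y by rewrite -mulmxA Mv mulmxN mxEN.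
  rewrite e1 e2; ring.
set q := (y *m M *m y^T) 0 0.
have q0 : 0 <= q := Q0 y.
have n0 := nrm2_ge0 y.
have key t : 0 <= t ^+ 2 * q - 2 * t * nrm2 y by rewrite -hexp.
have := key (nrm2 y / (q + 1)).
set t := nrm2 y / (q + 1).
have ht : t * (q + 1) = nrm2 y by rewrite /t divfK // gt_eqF // ltr_pwDr.
move=> h.
have t0 : t = 0 by nra.
have : nrm2 y = 0 by rewrite -ht t0 mul0r.
move/nrm2_eq0; rewrite hy => /eqP; rewrite subr_eq0 => /eqP.
done.
Qed.

Lemma orth_tr n (U : 'M[R]_n) : orthogonalmx U -> U^T *m U = 1%:M.
Proof. by move=> /mulmx1C. Qed.

Lemma orth_trmx n (U : 'M[R]_n) : orthogonalmx U -> orthogonalmx U^T.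
Proof. by move=> /mulmx1C; rewrite /orthogonalmx trmxK. Qed.

Lemma orth_mul n (U V : 'M[R]_n) : orthogonalmx U -> orthogonalmx V -> orthogonalmx (U *m V).
Proof.
by rewrite /orthogonalmx => hU hV; rewrite trmx_mul mulmxA -(mulmxA U) hV mulmx1.
Qed.

Lemma orth1 n : orthogonalmx (1%:M : 'M[R]_n).
Proof. by rewrite /orthogonalmx trmx1 mulmx1. Qed.

Lemma orth_block p (U : 'M[R]_p) : orthogonalmx U ->
  orthogonalmx (block_mx (1%:M : 'M_1) 0 0 U).
Proof.
rewrite /orthogonalmx => hU; rewrite tr_block_mx !trmx0 trmx1 mulmx_block.
rewrite !mulmx0 !mul0mx !addr0 !add0r mulmx1 hU.
by rewrite -scalar_mx_block.
Qed.

Lemma rdiag_cons p q x (s : seq R) :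
  rdiag (1 + p) (1 + q) (x :: s) = block_mx x%:M 0 0 (rdiag p q s).
Proof.
apply/matrixP => i j; rewrite !mxE.
case: (splitP i) => i' hi; rewrite !mxE; case: (splitP j) => j' hj; rewrite !mxE hi hj.
- by rewrite (ord1 i') (ord1 j') /= mulr1n.
- by rewrite (ord1 i').
- by rewrite (ord1 j').
- by rewrite /= !add1n eqSS.
Qed.

Lemma usub1' n : usubmx (1%:M : 'M[R]_(1 + n)) = row_mx 1%:M 0.
Proof. exact: usub1. Qed.

Lemma usub_step m p q n (Y : 'M[R]_(m, n)) (K1 : 'M[R]_(1 + p, m))
  (K2 : 'M[R]_(1 + q, n)) a (x : 'rV[R]_m) (y : 'rV[R]_n) :
  K2 *m K2^T = 1%:M -> usubmx K1 = x -> usubmx K2 = y -> x *m Y = a *: y ->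
  usubmx (K1 *m Y *m K2^T) = row_mx a%:M 0.
Proof.
move=> hK2 h1 h2 hxy.
rewrite -!mul_usub_mx h1 hxy -scalemxAl -h2 mul_usub_mx hK2 usub1.
by rewrite scale_row_mx scaler0 scalemx1.
Qed.

Lemma svd_zero m1 m2 : is_svals (0 : 'M[R]_(m1, m2)) (nseq (minn m1 m2) 0).
Proof.
split; first by rewrite size_nseq.
- by elim: (minn m1 m2) => // -[|k] //= ->; rewrite lexx.
- by apply/allP => x /nseqP [->].
- exists (1%:M : 'M[R]_m1), (1%:M : 'M[R]_m2); split; try exact: orth1.
rewrite trmx1 mulmx1 mul1mx; apply/matrixP => i j; rewrite !mxE nth_nseq.
by rewrite !if_same.
Qed.

Lemma nrm2_delta n (j : 'I_n) : nrm2 (delta_mx 0 j : 'rV[R]_n) = 1.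
Proof.
rewrite nrm2E (bigD1 j) //= big1 => [|i hi]; first by rewrite mxE !eqxx /= expr1n addr0.
by rewrite mxE (negbTE hi) andbF expr0n.
Qed.

Lemma nrm2_rdiag_col p q (s : seq R) k (hp : (k < p)%N) (hq : (k < q)%N) :
  nrm2 (delta_mx 0 (Ordinal hq) *m (rdiag p q s)^T) = s`_k ^+ 2.
Proof.
rewrite -rowE nrm2E (bigD1 (Ordinal hp)) //= big1 => [|i hi].
  by rewrite !mxE eqxx addr0.
rewrite !mxE; case: eqP => [h|_]; last by rewrite expr0n.
by case/negP: hi; apply/eqP/val_inj.
Qed.

Lemma assemble p q (H1 : 'M[R]_(1 + p)) (H2 : 'M[R]_(1 + q)) sg (U' : 'M[R]_p)
  (V' : 'M[R]_q) (D' : 'M[R]_(p, q)) :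
  H1^T *m block_mx sg%:M 0 0 (U' *m D' *m V'^T) *m H2 =
  (H1^T *m block_mx 1%:M 0 0 U') *m block_mx sg%:M 0 0 D' *m
    (H2^T *m block_mx 1%:M 0 0 V')^T.
Proof.
rewrite trmx_mul trmxK tr_block_mx !trmx0 tr_scalar_mx.
rewrite !mulmxA; congr (_ *m _); rewrite -!mulmxA; congr (_ *m _).
rewrite !mulmx_block !mulmx0 !mul0mx !addr0 !add0r !mul1mx !mulmx1.
by rewrite mulmx0.
Qed.

End P2.

Section P3.
Variable R : realType.
Local Open Scope classical_set_scope.

Lemma cont_sum (T : topologicalType) I (r : seq I) (F : I -> T -> R) :
  (forall i, continuous (F i)) -> continuous (fun x => \sum_(i <- r) F i x).
Proof.
move=> h; elim: r => [|i r IH].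
  under eq_fun do rewrite big_nil. exact: cst_continuous.
under eq_fun do rewrite big_cons.
by move=> x; apply: cvgD; [exact: h | exact: IH].
Qed.

Lemma cont_coord n (j : 'I_n) : continuous (fun w : 'rV[R]_n => w 0 j).
Proof. exact: coord_continuous. Qed.

Lemma cont_nrm2 n : continuous (@nrm2 R n).
Proof.
have -> : @nrm2 R n = (fun w => \sum_(j <- index_enum 'I_n)
    ((fun w : 'rV[R]_n => w 0 j) \* (fun w : 'rV[R]_n => w 0 j)) w).
  by apply/funext => w; rewrite nrm2E; apply: eq_bigr => j _; rewrite expr2.
by apply: cont_sum => j x; apply: continuousM; exact: cont_coord.
Qed.

Lemma cont_gX m n (X : 'M[R]_(m, n)) : continuous (gX X).
Proof.
have -> : gX X = (fun w => \sum_(i <- index_enum 'I_m)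
   ((fun w : 'rV[R]_n => \sum_(j <- index_enum 'I_n) ((fun w : 'rV[R]_n => w 0 j) \* (fun _ => X i j)) w) \*
    (fun w : 'rV[R]_n => \sum_(j <- index_enum 'I_n) ((fun w : 'rV[R]_n => w 0 j) \* (fun _ => X i j)) w)) w).
  apply/funext => w; rewrite /gX nrm2E; apply: eq_bigr => i _; rewrite expr2 /= mxE.
  by congr (_ * _); apply: eq_bigr => j _; rewrite mxE.
apply: cont_sum => i x; apply: continuousM; move: x; apply: cont_sum => j y;
  (apply: continuousM; [exact: cont_coord | exact: cst_continuous]).
Qed.

Lemma maxv m n (X : 'M[R]_(m, n.+1)) :
  exists2 v, nrm2 v = 1 & forall w, nrm2 w = 1 -> gX X w <= gX X v.
Proof.
pose S := [set w : 'rV[R]_n.+1 | nrm2 w = 1]%classic.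
have S0 : S !=set0.
  exists (delta_mx 0 ord0 : 'rV[R]_n.+1); rewrite /S /= nrm2E (bigD1 ord0) //= big1 => [|i hi].
    by rewrite mxE !eqxx /= expr1n addr0.
  by rewrite mxE (negbTE hi) andbF expr0n.
have Scl : closed S.
  have : closed (@nrm2 R n.+1 @^-1` [set x | x = 1]).
    by apply: preimage_closed; [move=> x _; exact: cont_nrm2 | exact: closed_eq].
  by [].
have Sc : compact S.
  have Bc := @rV_compact R n.+1 (fun=> `[-1, 1]%classic) (fun=> @segment_compact R (-1) 1).
  apply: (subclosed_compact Scl Bc).
  move=> w /= w1 i; rewrite /= in_itv /=.
  have : w 0 i ^+ 2 <= 1.
    rewrite -w1 nrm2E (bigD1 i) //= lerDl sumr_ge0 // => j _; exact: sqr_ge0.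
  by move=> h; apply/andP; split; nra.
have [c cS hc] := EVT_max_rV S0 Sc (continuous_subspaceT (@cont_gX _ _ X)).
exists c; first exact: (set_mem cS).
by move=> w w1; apply: hc; exact: mem_set.
Qed.

End P3.

Section P4.
Variable R : realType.

Lemma svd_ex m1 m2 (X : 'M[R]_(m1, m2)) : exists s, is_svals X s.
Proof.
elim: m1 m2 X => [|p IH] m2 X.
  exists [::]; split => //; try by rewrite min0n.
  exists 1%:M, 1%:M; split; try exact: orth1.
  by rewrite [X]flatmx0 [RHS]flatmx0.
case: m2 X => [|q] X.
  exists [::]; split => //; try by rewrite minn0.
  exists 1%:M, 1%:M; split; try exact: orth1.
  by rewrite [X]thinmx0 [RHS]thinmx0.
have [->|X0] := eqVneq X 0; first by exists (nseq (minn p.+1 q.+1) 0); exact: svd_zero.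
have [v v1 hmax] := maxv X.
have hall := max_all v1 hmax.
have hev := eigen_max v1 hall.
set l := gX X v in hall hev.
have lpos : 0 < l.
  rewrite lt0r nrm2_ge0 andbT; apply: contraNneq X0 => l0.
  rewrite -trmx_eq0; apply/eqP/row_matrixP => j; rewrite row0 rowE.
  apply: nrm2_eq0; apply/eqP; rewrite eq_le nrm2_ge0 andbT.
  by have := hall (delta_mx 0 j); rewrite /gX l0 mul0r.
set sg := Num.sqrt l.
have sgpos : 0 < sg by rewrite sqrtr_gt0.
have sg2 : sg ^+ 2 = l by rewrite sqr_sqrtr // ltW.
pose u := sg^-1 *: (v *m X^T).
have u1 : nrm2 u = 1 by rewrite nrm2Z -/(gX X v) -/l exprVn sg2 mulVf ?gt_eqF.
have huX : u *m X = sg *: v.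
  rewrite -scalemxAl -mulmxA hev scalerA -sg2 expr2 mulKf ?gt_eqF //.
have hvX : v *m X^T = sg *: u by rewrite /u scalerA mulfV ?gt_eqF // scale1r.
have [H1 [oH1 uH1]] := @householder R p u u1.
have [H2 [oH2 vH2]] := @householder R q v v1.
pose Z : 'M[R]_(1 + p, 1 + q) := H1 *m X *m H2^T.
have hu : usubmx Z = row_mx sg%:M 0 := usub_step oH2 uH1 vH2 huX.
have hZT : usubmx Z^T = row_mx sg%:M 0.
  rewrite /Z !trmx_mul trmxK mulmxA; exact: usub_step oH1 vH2 uH1 hvX.
have Zb : Z = block_mx sg%:M 0 0 (drsubmx Z).
  rewrite -{1}(submxK Z); congr block_mx.
  - by rewrite /ulsubmx hu row_mxKl.
  - by rewrite /ursubmx hu row_mxKr.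
  - by rewrite -[Z]trmxK -trmx_ursub /ursubmx hZT row_mxKr trmx0.
have hX : X = H1^T *m Z *m H2.
  by rewrite /Z !mulmxA (orth_tr oH1) mul1mx -mulmxA (orth_tr oH2) mulmx1.
clearbody Z.
set Z' := drsubmx Z in Zb.
have hZb : forall w' : 'rV[R]_q, gX Z' w' <= l * nrm2 w'.
  move=> w'; pose w := row_mx 0 w' *m H2.
  have e1 : gX X w = gX Z' w'.
    rewrite /gX /w {1}hX !trmx_mul trmxK !mulmxA -(mulmxA _ H2) oH2 mulmx1.
    rewrite nrm2_orth // Zb tr_block_mx !trmx0 mul_row_block !mulmx0 !mul0mx !addr0.
    by rewrite add0r nrm2_row nrm2_0 add0r.
  have e2 : nrm2 w = nrm2 w'.
    by rewrite /w nrm2_orth // nrm2_row nrm2_0 add0r.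
  by rewrite -e1 -e2; exact: hall.
have [s' [hsz hsort hnn [U' [V' [oU' oV' hZ']]]]] := IH q Z'.
exists (sg :: s'); split.
- by rewrite /= hsz minnSS.
- rewrite /= path_sortedE; last by move=> a b c hab hbc; exact: le_trans hbc hab.
  rewrite hsort andbT; apply/(all_nthP 0) => k hk.
  have hk' : (k < minn p q)%N by rewrite -hsz.
  have hkp : (k < p)%N by rewrite (leq_trans hk') ?geq_minl.
  have hkq : (k < q)%N by rewrite (leq_trans hk') ?geq_minr.
  pose w' : 'rV[R]_q := delta_mx 0 (Ordinal hkq) *m V'^T.
  have w'1 : nrm2 w' = 1 by rewrite /w' nrm2_orth ?nrm2_delta // trmxK (orth_tr oV').
  have : gX Z' w' = s'`_k ^+ 2.
    rewrite /gX /w' hZ' !trmx_mul !trmxK !mulmxA -(mulmxA _ V'^T) (orth_tr oV') mulmx1.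
    by rewrite nrm2_orth ?nrm2_rdiag_col // trmxK (orth_tr oU').
  move=> hg; have := hZb w'; rewrite hg w'1 mulr1 => hle.
  have nn : 0 <= s'`_k by apply: (allP hnn); rewrite mem_nth.
  by rewrite /sg -(ger0_norm nn) -sqrtr_sqr ler_wsqrtr.
- by rewrite /= hnn andbT ltW.
exists (H1^T *m block_mx 1%:M 0 0 U'), (H2^T *m block_mx 1%:M 0 0 V'); split.
- by apply: orth_mul; [exact: orth_trmx | exact: orth_block].
- by apply: orth_mul; [exact: orth_trmx | exact: orth_block].
rewrite {1}hX Zb hZ' rdiag_cons; exact: assemble.
Qed.

End P4.

Section P1.
Variable R : realType.

Definition mpow n (M : 'M[R]_n) k := iter k (mulmx M) 1%:M.


Lemma rdiag_DDt m1 m2 (s : seq R) : (size s <= minn m1 m2)%N ->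
  rdiag m1 m2 s *m (rdiag m1 m2 s)^T = diag_mx (\row_(i < m1) (s`_i ^+ 2)).
Proof.
move=> hs; apply/matrixP => i k; rewrite !mxE.
have [ilt|ige] := ltnP i m2.
  rewrite (bigD1 (Ordinal ilt)) //= big1 => [|j /negbTE hj]; last first.
    rewrite !mxE; case: eqP => [h|_]; last by rewrite mul0r.
    by case/negP: hj; apply/eqP/val_inj => /=; rewrite -h.
  rewrite !mxE eqxx addr0 (eq_sym (k : nat)) -(inj_eq val_inj) /=.
  by case: eqP => [->|_]; rewrite ?mulr1n ?mulr0n ?mulr0 // expr2.
have -> : s`_i = 0.
  by apply: nth_default; apply: leq_trans hs _; rewrite (leq_trans (geq_minr _ _)).
rewrite expr0n /= mul0rn big1 // => j _; rewrite !mxE.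
have -> : ((i : nat) == j) = false by apply/negbTE; rewrite neq_ltn (leq_trans (ltn_ord j)) ?orbT.
by rewrite mul0r.
Qed.

Lemma mpow_conj n (U : 'M[R]_n) (D : 'M[R]_n) k : U^T *m U = 1%:M ->
  mpow (U *m D *m U^T) k.+1 = U *m mpow D k.+1 *m U^T.
Proof.
move=> hU; elim: k => [|k IH]; first by rewrite /mpow /= !mulmx1.
rewrite /mpow iterS -/(mpow _ _) IH iterS -/(mpow _ _).
by rewrite !mulmxA -(mulmxA _ U^T) hU mulmx1 -!mulmxA.
Qed.

Lemma mpow_diag n (d : 'rV[R]_n) k :
  mpow (diag_mx d) k = diag_mx (\row_i (d 0 i ^+ k)).
Proof.
elim: k => [|k IH].
  by rewrite /mpow /=; apply/matrixP => i j; rewrite !mxE expr0.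
rewrite /mpow iterS -/(mpow _ _) IH mulmx_diag; congr diag_mx.
by apply/rowP => j; rewrite !mxE exprS.
Qed.

Lemma tr_mpow m1 m2 (X : 'M[R]_(m1, m2)) s k : is_svals X s ->
  \tr (mpow (X *m X^T) k) = \sum_(i < m1) (s`_i ^+ 2) ^+ k.
Proof.
case=> hsz _ _ [U [V [hU hV ->]]].
have -> : U *m rdiag m1 m2 s *m V^T *m (U *m rdiag m1 m2 s *m V^T)^T =
   U *m diag_mx (\row_(i < m1) (s`_i ^+ 2)) *m U^T.
  rewrite !trmx_mul !trmxK !mulmxA -(mulmxA _ V^T) (orth_tr hV) mulmx1.
  by rewrite -(mulmxA U) rdiag_DDt ?hsz.
case: k => [|k].
  rewrite /mpow /= mxtrace1; under eq_bigr do rewrite expr0.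
  by rewrite sumr_const card_ord.
rewrite mpow_conj ?orth_tr // mxtrace_mulC mulmxA (orth_tr hU) mul1mx.
by rewrite mpow_diag mxtrace_diag; apply: eq_bigr => i _; rewrite mxE mxE.
Qed.

Lemma svals_poly m1 m2 (X : 'M[R]_(m1, m2)) s (q : {poly R}) : is_svals X s ->
  q.[0] = 0 ->
  \sum_(j < minn m1 m2) q.[s`_j ^+ 2] =
  \sum_(k < size q) q`_k * \tr (mpow (X *m X^T) k).
Proof.
move=> hX q0.
under [RHS]eq_bigr do rewrite (tr_mpow _ hX) mulr_sumr.
rewrite exchange_big /=.
under [RHS]eq_bigr do rewrite -horner_coef.
rewrite (big_ord_widen m1 (fun j => q.[s`_j ^+ 2])) ?geq_minl //.
rewrite [RHS](bigID (fun i : 'I_m1 => (i < minn m1 m2)%N)) /= [X in _ = _ + X]big1 ?addr0 // => i.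
rewrite -leqNgt => hi; case: hX => hsz _ _ _.
by rewrite nth_default ?hsz // expr0n.
Qed.


Lemma interp (ys : seq R) (G : R -> R) :
  exists q : {poly R}, forall y, y \in ys -> q.[y] = G y.
Proof.
elim: ys => [|y ys [q Hq]]; first by exists 0.
have [yin|ynin] := boolP (y \in ys).
  by exists q => z; rewrite inE => /orP[/eqP->|]; [exact: Hq|exact: Hq].
pose P := \prod_(z <- ys) ('X - z%:P).
have Py : P.[y] != 0.
  rewrite horner_prod prodf_seq_neq0; apply/allP => z zin /=.
  rewrite hornerXsubC subr_eq0; by apply: contraNneq ynin => ->.
exists (q + ((G y - q.[y]) / P.[y]) *: P) => z; rewrite inE hornerD hornerZ.
case/orP=> [/eqP->|zin]; first by rewrite divfK // addrC subrK.
have -> : P.[z] = 0.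
  apply/eqP; rewrite horner_prod prodf_seq_eq0; apply/hasP; exists z => //=.
  by rewrite hornerXsubC subrr.
by rewrite mulr0 addr0 Hq.
Qed.

Lemma orthoproj_ker m n (A : 'M[R]_(m, n)) :
  (orthoproj (kermx A))^T = orthoproj (kermx A) /\ orthoproj (kermx A) *m A = 0.
Proof.
rewrite /orthoproj; case: xgetP => [P _ /= [HT _ /andP[Hs _]]|_].
  by split=> //; apply/sub_kermxP.
by rewrite trmx0 mul0mx.
Qed.

Lemma mpow_add n (M N : 'M[R]_n) k : M *m N = 0 -> N *m M = 0 ->
  mpow (M + N) k.+1 = mpow M k.+1 + mpow N k.+1.
Proof.
move=> MN NM; elim: k => [|k IH]; first by rewrite /mpow /= !mulmx1.
rewrite /mpow iterS -/(mpow _ _) IH mulmxDl !mulmxDr.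
rewrite /mpow !iterS -!/(mpow _ _).
have -> : M *m mpow N k.+1 = 0 by rewrite /mpow iterS -/(mpow _ _) mulmxA MN mul0mx.
have -> : N *m mpow M k.+1 = 0 by rewrite /mpow iterS -/(mpow _ _) mulmxA NM mul0mx.
by rewrite addr0 add0r.
Qed.

Definition Ff (a x : R) := (a + 1) * x / (a + x).


Lemma svals_ok m1 m2 (X : 'M[R]_(m1, m2)) : is_svals X (svals X).
Proof. exact: xgetPex (svd_ex X). Qed.

Lemma TL1_poly a m1 m2 (X : 'M[R]_(m1, m2)) (q : {poly R}) :
  q.[0] = 0 -> (forall x, x \in svals X -> q.[x ^+ 2] = Ff a x) ->
  TL1 a X = \sum_(k < size q) q`_k * \tr (mpow (X *m X^T) k).
Proof.
move=> q0 hq; rewrite -(svals_poly (svals_ok X) q0) /TL1.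
apply: eq_bigr => j _; rewrite hq // /sigma; apply: mem_nth.
by case: (svals_ok X) => -> _ _ _.
Qed.

Theorem lemma4' (m1 m2 : nat) (a : R) (A B : 'M[R]_(m1, m2)) :
  TL1 a (A + Pperp A B) = TL1 a A + TL1 a (Pperp A B).
Proof.
set C := Pperp A B.
have [q Hq] := interp (0 :: map (fun x => x ^+ 2) (svals A ++ svals C ++ svals (A + C)))
   (fun y => Ff a (Num.sqrt y)).
have q0 : q.[0] = 0 by rewrite Hq ?mem_head // sqrtr0 /Ff mulr0 mul0r.
have hq m1' m2' (X : 'M[R]_(m1', m2')) : 
  {subset svals X <= svals A ++ svals C ++ svals (A + C)} ->
  forall x, x \in svals X -> q.[x ^+ 2] = Ff a x.
  move=> sub x xin; rewrite Hq; last by rewrite inE; apply/orP; right; apply: map_f; exact: sub.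
  rewrite sqrtr_sqr ger0_norm //.
  by case: (svals_ok X) => _ _ /allP /(_ x xin).
rewrite (TL1_poly q0 (hq _ _ (A + C) _)); last by move=> x; rewrite !mem_cat => ->; rewrite !orbT.
rewrite (TL1_poly q0 (hq _ _ A _)); last by move=> x; rewrite !mem_cat => ->.
rewrite (TL1_poly q0 (hq _ _ C _)); last by move=> x; rewrite !mem_cat => ->; rewrite !orbT.
rewrite -big_split /=; apply: eq_bigr => -[[|k] hk] _ /=.
  by rewrite -horner_coef0 q0 !mul0r addr0.
have [HT1 HA1] := orthoproj_ker A.
have [HT2 HA2] := orthoproj_ker A^T.
rewrite -mulrDr -mxtraceD; congr (_ * _); congr (\tr _).
have hAP2 : A *m orthoproj (kermx A^T) = 0.
  by rewrite -(trmxK (A *m _)) trmx_mul HT2 HA2 trmx0.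
have hAC : A *m C^T = 0.
  rewrite /C /Pperp /SVperp !trmx_mul HT2 !mulmxA.
  by rewrite hAP2 !mul0mx.
have hCA : C *m A^T = 0 by rewrite -(trmxK (C *m A^T)) trmx_mul trmxK hAC trmx0.
have hAtC : A^T *m C = 0.
  have hA1 : A^T *m orthoproj (kermx A) = 0.
    by rewrite -(trmxK (_ *m _)) trmx_mul trmxK HT1 HA1 trmx0.
  by rewrite /C /Pperp /SUperp !mulmxA hA1 !mul0mx.
rewrite (raddfD (@trmx R m1 m2)) mulmxDl !mulmxDr hAC hCA addr0 add0r.
apply: mpow_add.
  by rewrite mulmxA -(mulmxA A) hAtC mulmx0 mul0mx.
have hCtA : C^T *m A = 0 by rewrite -(trmxK (C^T *m A)) trmx_mul trmxK hAtC trmx0.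
by rewrite -mulmxA (mulmxA C^T) hCtA mul0mx mulmx0.
Qed.

End P1.

Theorem lemma4 (R : realType) (m1 m2 : nat) (a : R) (A B : 'M[R]_(m1, m2)) :
  0 < a ->
  TL1 a (A + Pperp A B) = TL1 a A + TL1 a (Pperp A B).
Proof. by move=> _; exact: lemma4'. Qed.
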